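(* Suppose the internal state of target $i$ is scalar ($L_i=1$). Then, for fixed $\rho$ with $g_i(\|\Omega_{i,ss}\|)<\rho<g_i(\|\Omega_i^\infty\|)$, the function $T\mapsto\frac{\partial\beta_i(\rho,T)}{\partial T}$ is strictly positive and increasing.
   Context: Target $i$ has scalar state with $\dot\phi_i=A_i\phi_i+B_iu_i+w_i$, $w_i$ white Gaussian with variance $Q_i>0$, observations $z_i=H_i\phi_i+v_i$ with $v_i\sim\mathcal N(0,R_i)$, $R_i>0$, $H_i\neq0$, and $G_i=H_i^2/R_i$. Its error variance obeys $\dot\Omega_i=2A_i\Omega_i+Q_i-\eta_i(t)G_i\Omega_i^2$, $\eta_i(t)\in\{0,1\}$. Under a periodic schedule of period $T$ in which the target is observed for one interval of length $t_{\text{on},i}$ and unobserved for $t_{\text{off},i}=T-t_{\text{on},i}$, let $\overline P_i(t_{\text{on},i},t_{\text{off},i})$ be the value of the $T$-periodic steady-state solution at the start of the observation interval. $\Omega_{i,ss}$ is the positive solution of $2A_i\Omega+Q_i-G_i\Omega^2=0$, and $\Omega_i^\infty=\lim_{t\to\infty}\int_0^te^{2A_i\gamma}Q_i\,d\gamma$ (the limiting variance if never observed; $+\infty$ if $A_i\ge0$). $g_i$ is strictly increasing with $g_i(0)=0$, $g_i(x)\to\infty$, and $\|\cdot\|$ is a norm. For $T>0$ and $g_i(\|\Omega_{i,ss}\|)\le\rho\le g_i(\|\Omega_i^\infty\|)$, $\beta_i(\rho,T)\in[0,T]$ denotes the dwell time $t_{\text{on},i}$ for which $g_i(\|\overline P_i(\beta_i(\rho,T),T-\beta_i(\rho,T))\|)=\rho$.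 Standing assumption: for $\rho$ strictly between these bounds, $\beta_i(\rho,T)$ is differentiable with respect to $T$. *)

(* Defs.v *)
From Stdlib Require Import Reals.
From Coquelicot Require Import Coquelicot.
Open Scope R_scope.

Definition is_norm (nrm : R -> R) : Prop :=
  (forall x, 0 <= nrm x) /\
  (forall x, nrm x = 0 -> x = 0) /\
  (forall a x, nrm (a * x) = Rabs a * nrm x) /\
  (forall x y, nrm (x + y) <= nrm x + nrm y).

Definition is_gfun (g : R -> R) : Prop :=
  (forall x y, 0 <= x -> x < y -> g x < g y) /\
  g 0 = 0 /\
  is_lim g p_infty p_infty.

Definition Gi (H Rv : R) : R := H ^ 2 / Rv.

(* Omega_i^oo = lim_{t->oo} int_0^t e^{2 A gamma} Q d gamma  (in Rbar; +oo if A >= 0). *)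
Definition Omega_inf (A Q : R) : Rbar :=
  Lim (fun t => RInt (fun s => exp (2 * A * s) * Q) 0 t) p_infty.

Definition g_norm_bar (g nrm : R -> R) (x : Rbar) : Rbar :=
  match x with
  | Finite w => Finite (g (nrm w))
  | _ => p_infty
  end.

(* Om is a (positive, continuous) T-periodic solution, T = ton + toff, of
   dOm/dt = 2 A Om + Q - eta(t) G Om^2, where eta = 1 on [kT, kT + ton)
   (observation interval) and eta = 0 on [kT + ton, (k+1) T). The ODE is
   required on the open subintervals; Om is continuous across switches. *)
Definition periodic_sol (A Q G ton toff : R) (Om : R -> R) : Prop :=
  let T := ton + toff in
  (forall t, 0 < Om t) /\
  (forall t, continuous Om t) /\
  (forall t, Om (t + T) = Om t) /\
  (forall (k : Z) t, IZR k * T < t < IZR k * T + ton ->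
      is_derive Om t (2 * A * Om t + Q - G * (Om t) ^ 2)) /\
  (forall (k : Z) t, IZR k * T + ton < t < IZR k * T + T ->
      is_derive Om t (2 * A * Om t + Q)).

(* Pbar(ton, toff) = value of the periodic steady-state solution at the start
   of the observation interval (time 0). *)
Definition is_Pbar (A Q G ton toff p : R) : Prop :=
  exists Om, periodic_sol A Q G ton toff Om /\ Om 0 = p.

(* b = beta(rho, T): dwell time in [0,T] with g(||Pbar(b, T - b)||) = rho. *)
Definition is_beta (A Q G : R) (g nrm : R -> R) (rho T b : R) : Prop :=
  0 <= b <= T /\
  exists p, is_Pbar A Q G b (T - b) p /\ g (nrm p) = rho.

(* Main.v *)
Require Import Defs.
From Stdlib Require Import Reals Lra Psatz.
From Coquelicot Require Import Coquelicot.
Open Scope R_scope.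

Lemma rmin_le x y : x <= y -> Rmin x y = x.
Proof. intros; unfold Rmin; destruct Rle_dec; lra. Qed.
Lemma rmax_le x y : x <= y -> Rmax x y = y.
Proof. intros; unfold Rmax; destruct Rle_dec; lra. Qed.

Lemma is_derive_idR (t : R) : is_derive (fun x : R => x) t 1.
Proof. apply (is_derive_id (K:=R_AbsRing)). Qed.

Lemma incr_of_deriv f df x y : x < y ->
  (forall t, x <= t <= y -> is_derive f t (df t)) ->
  (forall t, x <= t <= y -> 0 < df t) -> f x < f y.
Proof.
  intros Hxy Hd Hp.
  destruct (MVT_gen f x y df) as [c [Hc He]].
  - rewrite rmin_le, rmax_le by lra. intros; apply Hd; lra.
  - rewrite rmin_le, rmax_le by lra. intros t Ht.
    apply continuity_pt_filterlim. apply (ex_derive_continuous f).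
    eexists; apply Hd; lra.
  - rewrite rmin_le, rmax_le in Hc by lra.
    assert (0 < df c) by (apply Hp; lra). nra.
Qed.

Lemma core (A Q G a c : R) (v u beta : R -> R) :
 0 < G -> 0 < Q -> c < 0 -> 0 < a ->
 (forall x, G*(x-a)*(x-c) = G*x^2 - 2*A*x - Q) ->
 (forall b, 0 <= b -> is_derive v b (-G*(v b - a)*(v b - c)) /\ a < v b) ->
 (forall s, is_derive u s (-(2*A*u s + Q))) -> (forall s, 0 < 2*A*u s + Q) ->
 (forall T, 0 < T -> 0 <= beta T <= T /\ v (beta T) = u (T - beta T)) ->
 (forall T, 0 < T -> ex_derive beta T) ->
  (forall T, 0 < T -> 0 < Derive beta T) /\
  (forall T1 T2, 0 < T1 -> T1 < T2 -> Derive beta T1 < Derive beta T2).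
Proof.
  intros HG HQ Hc Ha Hid Hv Hu Hup Hb Hex.
  assert (key : forall T, 0 < T ->
     Derive beta T = (2*A*u (T - beta T) + Q) / (G * (u (T - beta T))^2)
     /\ a < u (T - beta T) /\ Derive beta T < 1).
  { intros T HT.
    destruct (Hb T HT) as [Hb1 Heq].
    destruct (Hv (beta T) (proj1 Hb1)) as [Hvd Hva].
    assert (Hbd : is_derive beta T (Derive beta T)) by (apply Derive_correct; auto).
    set (D := Derive beta T) in *.
    assert (H1 := is_derive_comp v beta T _ _ Hvd Hbd).
    assert (Hm : is_derive (fun t => t - beta t) T (1 - D)).
    { apply (is_derive_minus (fun t => t) beta T 1 D); [apply is_derive_idR|exact Hbd]. }
    assert (H2 := is_derive_comp u (fun t => t - beta t) T _ _ (Hu (T - beta T)) Hm).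
    assert (H3 : is_derive (fun t => u (t - beta t)) T (scal D (- G * (v (beta T) - a) * (v (beta T) - c)))).
    { apply (is_derive_ext_loc (fun t => v (beta t))); [|exact H1].
      exists (mkposreal T HT). intros t Ht. apply Hb.
      unfold ball in Ht; simpl in Ht; unfold AbsRing_ball, abs, minus, plus, opp in Ht; simpl in Ht.
      apply Rabs_def2 in Ht. lra. }
    cbv beta in H2. assert (E := is_derive_unique _ _ _ H2). assert (E' := is_derive_unique _ _ _ H3).
    rewrite E' in E. clear E'.
    unfold scal in E; simpl in E; unfold mult in E; simpl in E.
    rewrite Heq in E, Hva. set (w := u (T - beta T)) in *.
    assert (Hw := Hid w).
    assert (HGw : G * w^2 * D = 2*A*w+Q) by nra.
    assert (0 < G * w^2) by (apply Rmult_lt_0_compat; [lra| apply pow_lt; lra]).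
    split; [|split; auto].
    - apply (Rmult_eq_reg_l (G*w^2)); [|lra]. field_simplify; [nra|nra].
    - assert (G*(w-a)*(w-c) > 0). { apply Rmult_gt_0_compat; [nra|lra]. }
      nra. }
  split.
  - intros T HT. destruct (key T HT) as [E [Ha' _]]. rewrite E.
    assert (0 < u (T - beta T)) by lra.
    apply Rdiv_lt_0_compat; [apply Hup|apply Rmult_lt_0_compat; [lra| apply pow_lt; lra]].
  - intros T1 T2 H1 H2.
    destruct (key T1 H1) as [E1 [Ha1 D1]]. destruct (key T2 ltac:(lra)) as [E2 [Ha2 D2]].
    assert (Hphi : T1 - beta T1 < T2 - beta T2).
    { apply (incr_of_deriv (fun t => t - beta t) (fun t => 1 - Derive beta t)); auto.
      - intros t Ht. apply (is_derive_minus (fun t => t) beta t 1); [apply is_derive_idR|].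
        apply Derive_correct, Hex; lra.
      - intros t Ht. destruct (key t ltac:(lra)) as [_ [_ Hd]]. lra. }
    assert (Hdec : u (T2 - beta T2) < u (T1 - beta T1)).
    { assert (Hn : - u (T1 - beta T1) < - u (T2 - beta T2)).
      { apply (incr_of_deriv (fun s => - u s) (fun s => 2*A*u s + Q)); auto.
        intros t _. replace (2*A*u t + Q) with (-(-(2*A*u t + Q))) by ring.
        exact (is_derive_opp u t _ (Hu t)). }
      lra. }
    rewrite E1, E2.
    set (w1 := u (T1 - beta T1)) in *. set (w2 := u (T2 - beta T2)) in *.
    assert (P1 := Hup (T1 - beta T1)). assert (P2 := Hup (T2 - beta T2)).
    fold w1 in P1. fold w2 in P2.
    assert (0 < w1^2) by (apply pow_lt; lra). assert (0 < w2^2) by (apply pow_lt; lra).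
    apply (Rmult_lt_reg_r (G*w1^2*(G*w2^2))). { apply Rmult_lt_0_compat; apply Rmult_lt_0_compat; lra. }
    field_simplify; try lra.
    assert (Hpos : 0 < (w1 - w2) * (w1 * (2*A*w2+Q) + Q*w2)).
    { apply Rmult_lt_0_compat; [lra|]. assert (0 < w1 * (2*A*w2+Q)) by (apply Rmult_lt_0_compat; lra). assert (0 < Q*w2) by (apply Rmult_lt_0_compat; lra). lra. }
    assert (0 < G * ((w1 - w2) * (w1 * (2*A*w2+Q) + Q*w2))) by (apply Rmult_lt_0_compat; lra).
    match goal with |- ?l < ?r => assert (r - l = G * ((w1 - w2) * (w1 * (2*A*w2+Q) + Q*w2))) by ring end.
    lra.
Qed.




Lemma const_of_deriv0 K x y : x <= y ->
  (forall t, x < t < y -> is_derive K t 0) ->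
  (forall t, x <= t <= y -> continuous K t) -> K x = K y.
Proof.
  intros Hxy Hd Hc.
  destruct (MVT_gen K x y (fun _ => 0)) as [z [_ He]].
  - rewrite rmin_le, rmax_le by lra. auto.
  - rewrite rmin_le, rmax_le by lra. intros t Ht. apply continuity_pt_filterlim, Hc; auto.
  - lra.
Qed.

Lemma Derive_eta (f : R -> R) t l : is_derive f t l -> Derive (fun x => f x) t = l.
Proof. intro H. apply is_derive_unique. exact H. Qed.

Definition ub (A Q p s : R) : R :=
  if Req_dec_T A 0 then p - Q * s else (p + Q/(2*A)) * exp (-(2*A)*s) - Q/(2*A).

Lemma off_rel A Q Om x y : x <= y ->
  (forall t, continuous Om t) ->
  (forall t, x < t < y -> is_derive Om t (2*A*Om t + Q)) ->
  Om x = ub A Q (Om y) (y - x).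
Proof.
  intros Hxy Hc Hd. unfold ub. destruct (Req_dec_T A 0) as [HA|HA].
  - assert (E : Om x - Q * x = Om y - Q * y).
    { apply (const_of_deriv0 (fun t => Om t - Q * t) x y Hxy).
    - intros t Ht. specialize (Hd t Ht). rewrite HA in Hd.
      auto_derive; [eexists; exact Hd|].
      rewrite (Derive_eta _ _ _ Hd). ring.
    - intros t _. apply (continuous_minus Om (fun t => Q * t)); [apply Hc|].
      apply (continuous_mult (fun _ => Q) (fun t => t)); [apply continuous_const|apply continuous_id]. }
    lra.
  - assert (E : (Om x + Q/(2*A)) * exp (-(2*A)*x) = (Om y + Q/(2*A)) * exp (-(2*A)*y)).
    { apply (const_of_deriv0 (fun t => (Om t + Q/(2*A)) * exp (-(2*A)*t)) x y Hxy).
      - intros t Ht. specialize (Hd t Ht).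
        auto_derive; [eexists; exact Hd|].
        rewrite (Derive_eta _ _ _ Hd). field. auto.
      - intros t _. apply (continuous_mult (fun t => Om t + Q/(2*A)) (fun t => exp (-(2*A)*t))).
        * apply (continuous_plus Om (fun _ => Q/(2*A))); [apply Hc|apply continuous_const].
        * apply continuous_exp_comp. apply (continuous_mult (fun _ => -(2*A)) (fun t => t)); [apply continuous_const|apply continuous_id]. }
    assert (E2 : Om x + Q / (2*A) = (Om y + Q / (2 * A)) * exp (- (2 * A) * y) * exp (2*A*x)).
    { rewrite <- E. rewrite Rmult_assoc, <- exp_plus.
      replace (- (2 * A) * x + 2 * A * x) with 0 by ring. rewrite exp_0. ring. }
    assert (Om x = (Om y + Q / (2 * A)) * (exp (- (2 * A) * y) * exp (2*A*x)) - Q/(2*A)) by lra.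
    rewrite H, <- exp_plus. f_equal. f_equal. f_equal. ring.
Qed.

Definition vfun (a c G p b : R) : R :=
  let r := (p - a)/(p - c) in let E := r * exp (-(G*(a-c))*b) in (a - c*E)/(1-E).

Lemma on_rel A Q G a c Om b : 0 < G -> c < 0 -> 0 < a ->
  (forall x, G*(x-a)*(x-c) = G*x^2 - 2*A*x - Q) -> 0 <= b ->
  (forall t, 0 < Om t) -> (forall t, continuous Om t) ->
  (forall t, 0 < t < b -> is_derive Om t (2*A*Om t + Q - G*(Om t)^2)) ->
  Om b = vfun a c G (Om 0) b.
Proof.
  intros HG Hc Ha Hid Hb Hpos Hcont Hd.
  assert (Hc' : forall t, Om t - c <> 0) by (intro t; specialize (Hpos t); lra).
  assert (E : (Om 0 - a)/(Om 0 - c) = (Om b - a)/(Om b - c) * exp (G*(a-c)*b)).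
  { replace ((Om 0 - a)/(Om 0 - c)) with ((Om 0 - a)/(Om 0 - c) * exp (G*(a-c)*0))
      by (rewrite Rmult_0_r, exp_0; ring).
    apply (const_of_deriv0 (fun t => (Om t - a)/(Om t - c) * exp (G*(a-c)*t)) 0 b Hb).
  - intros t Ht. specialize (Hd t Ht). auto_derive.
    + split; [eexists; exact Hd| split; [eexists; exact Hd| split; [exact (Hc' t)| exact I]]].
    + rewrite (Derive_eta _ _ _ Hd).
      replace (2*A*Om t + Q - G*Om t^2) with (-(G*(Om t - a)*(Om t - c))) by (rewrite Hid; ring).
      field. exact (Hc' t).
  - intros t _. apply (continuous_mult (fun t => (Om t - a)/(Om t - c)) (fun t => exp (G*(a-c)*t))).
    + apply (continuous_mult (fun t => Om t - a) (fun t => / (Om t - c))).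
      * apply (continuous_minus Om (fun _ => a)); [apply Hcont|apply continuous_const].
      * apply continuous_Rinv_comp; [|apply Hc'].
        apply (continuous_minus Om (fun _ => c)); [apply Hcont|apply continuous_const].
    + apply continuous_exp_comp. apply (continuous_mult (fun _ => G*(a-c)) (fun t => t)); [apply continuous_const|apply continuous_id]. }
  { unfold vfun. set (p := Om 0) in *. set (w := Om b) in *.
    set (r := (p - a)/(p - c)). set (X := exp (-(G*(a-c))*b)).
    assert (HX : exp (G*(a-c)*b) * X = 1).
    { unfold X. rewrite <- exp_plus. replace (G * (a - c) * b + - (G * (a - c)) * b) with 0 by ring. apply exp_0. }
    assert (0 < X <= 1).
    { unfold X. split; [apply exp_pos|]. rewrite <- exp_0. 
      destruct (Req_dec b 0) as [->|]. right; f_equal; ring.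
      left. apply exp_increasing. assert (0 < G*(a-c)*b) by (apply Rmult_lt_0_compat; [apply Rmult_lt_0_compat|]; lra). lra. }
    assert (Hr : r < 1).
    { unfold r. assert (0 < p) by apply Hpos. apply (Rmult_lt_reg_r (p - c)); [lra|].
      field_simplify; lra. }
    assert (Hne : 1 - r * X <> 0).
    { destruct (Rle_dec r 0). assert (r*X <= 0) by nra. lra. assert (r*X <= r) by nra. lra. }
    assert (Ew : (w - a) / (w - c) = r * X).
    { unfold r. rewrite E. rewrite Rmult_assoc, HX. ring. }
    apply (Rmult_eq_reg_r (1 - r*X)); auto.
    unfold Rdiv at 1 in Ew.
    assert (w - a = r * X * (w - c)).
    { rewrite <- Ew. field. apply Hc'. }
    field_simplify; auto. nra.
  }
Qed.

Lemma Oinf A Q : A < 0 -> Omega_inf A Q = Finite (-Q/(2*A)).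
Proof.
  intros HA. unfold Omega_inf.
  rewrite (Lim_ext (fun t => Q * exp (2*A*t) / (2*A) - Q/(2*A))).
  2:{ intro t. symmetry. apply is_RInt_unique.
      replace (Q * exp (2*A*t) / (2*A) - Q/(2*A)) with
        (minus ((fun s => Q * exp (2*A*s) / (2*A)) t) ((fun s => Q * exp (2*A*s) / (2*A)) 0)).
      2:{ unfold minus, plus, opp; simpl. rewrite Rmult_0_r, exp_0. field. lra. }
      apply (is_RInt_derive (fun s => Q * exp (2*A*s) / (2*A)) (fun s => exp (2*A*s) * Q)).
      - intros x _. auto_derive; auto. field. lra.
      - intros x _. apply (continuous_mult (fun s => exp (2*A*s)) (fun _ => Q)).
        + apply continuous_exp_comp. apply (continuous_mult (fun _ => 2*A) (fun t => t)); [apply continuous_const|apply continuous_id].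
        + apply continuous_const. }
  apply is_lim_unique.
  assert (H1 : is_lim (fun t => 2*A*t) p_infty m_infty).
  { assert (H := is_lim_scal_l (fun t => t) (2*A) p_infty p_infty (is_lim_id p_infty)).
    replace (Rbar_mult (2 * A) p_infty) with m_infty in H; [exact H|].
    unfold Rbar_mult, Rbar_mult'. destruct (Rle_dec 0 (2*A)) as [h|h]; [exfalso; lra|reflexivity]. }
  assert (H2 : is_lim (fun t => exp (2*A*t)) p_infty 0).
  { apply (is_lim_comp exp (fun t => 2*A*t) p_infty 0 m_infty is_lim_exp_m H1).
    exists 0. intros; discriminate. }
  assert (H3 : is_lim (fun t => Q * exp (2*A*t) / (2*A)) p_infty 0).
  { assert (H := is_lim_scal_l _ (Q/(2*A)) _ _ H2).
    replace (Rbar_mult (Q / (2 * A)) 0) with (Finite 0) in H by (simpl; f_equal; ring).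
    eapply is_lim_ext; [|exact H]. intro y; simpl. field. lra. }
  assert (H4 := is_lim_minus' _ _ p_infty _ _ H3 (is_lim_const (Q/(2*A)) p_infty)).
  replace (Finite (- Q / (2 * A))) with (Finite (0 - Q/(2*A))) by (f_equal; field; lra).
  exact H4.
Qed.

Lemma exp_le1 x : x <= 0 -> exp x <= 1.
Proof. intros H. rewrite <- exp_0. destruct (Req_dec x 0) as [->|]; [lra|]. left; apply exp_increasing; lra. Qed.

Lemma vfun_props a c G p b : 0<G -> c<0 -> 0<a -> a<p -> 0<=b ->
 is_derive (vfun a c G p) b (-G*(vfun a c G p b - a)*(vfun a c G p b - c)) /\ a < vfun a c G p b.
Proof.
  intros HG Hc Ha Hp Hb.
  assert (Hr0 : 0 < (p - a)/(p - c)) by (apply Rdiv_lt_0_compat; lra).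
  assert (Hr1 : (p - a)/(p - c) < 1).
  { apply (Rmult_lt_reg_r (p - c)); [lra|]. field_simplify; lra. }
  assert (HX : 0 < exp (-(G*(a-c))*b) <= 1).
  { split; [apply exp_pos|]. apply exp_le1.
    assert (0 <= G*(a-c)*b) by (apply Rmult_le_pos; [apply Rmult_le_pos|]; lra). lra. }
  set (r := (p - a)/(p - c)) in *. set (X := exp (-(G*(a-c))*b)) in *.
  assert (HE : 0 < r * X < 1) by (split; [apply Rmult_lt_0_compat; lra| nra]).
  split.
  - unfold vfun. cbv zeta. fold r. auto_derive.
    + fold X. lra.
    + fold X. field. lra.
  - unfold vfun. cbv zeta. fold r. fold X.
    apply (Rmult_lt_reg_r (1 - r*X)); [lra|]. field_simplify; [|lra]. nra.
Qed.

Lemma ub_props A Q p s : 0 < Q -> (A <> 0 -> 0 < 2*A*p + Q) ->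
  is_derive (ub A Q p) s (-(2*A*ub A Q p s + Q)) /\ 0 < 2*A*ub A Q p s + Q.
Proof.
  intros HQ Hp. unfold ub. destruct (Req_dec_T A 0) as [HA|HA].
  - subst A. split; [auto_derive; auto; ring|lra].
  - split; [auto_derive; auto; field; auto|].
    replace (2 * A * ((p + Q / (2 * A)) * exp (- (2 * A) * s) - Q / (2 * A)) + Q)
      with ((2*A*p+Q) * exp (- (2 * A) * s)) by (field; auto).
    apply Rmult_lt_0_compat; [auto|apply exp_pos].
Qed.

Theorem lemma7 (A Q H Rv : R) (g nrm : R -> R) (Oss rho : R) (beta : R -> R) :
  0 < Q -> 0 < Rv -> H <> 0 ->
  is_norm nrm -> is_gfun g ->
  (* Oss = Omega_{i,ss}, the positive root of 2 A W + Q - G W^2 = 0 *)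
  0 < Oss -> 2 * A * Oss + Q - Gi H Rv * Oss ^ 2 = 0 ->
  (* g(||Omega_ss||) < rho < g(||Omega^oo||) *)
  g (nrm Oss) < rho ->
  Rbar_lt (Finite rho) (g_norm_bar g nrm (Omega_inf A Q)) ->
  (* beta T = beta_i(rho, T) for every T > 0 *)
  (forall T, 0 < T -> is_beta A Q (Gi H Rv) g nrm rho T (beta T)) ->
  (* standing assumption: differentiability in T *)
  (forall T, 0 < T -> ex_derive beta T) ->
  (forall T, 0 < T -> 0 < Derive beta T) /\
  (forall T1 T2, 0 < T1 -> T1 < T2 -> Derive beta T1 < Derive beta T2).

Proof.
  intros HQ HRv HH Hn Hg HOss Heq Hlow Hup Hbeta Hex.
  set (G := Gi H Rv) in *.
  assert (HG : 0 < G).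
  { unfold G, Gi. apply Rdiv_lt_0_compat; auto.
    replace (H^2) with (Rsqr H) by (unfold Rsqr; ring). apply Rsqr_pos_lt; auto. }
  destruct Hn as [Hn0 [Hnz [Hnh _]]].
  assert (Hn1 : forall x, nrm x = Rabs x * nrm 1).
  { intro x. rewrite <- Hnh. f_equal. ring. }
  assert (Hn1p : 0 < nrm 1).
  { destruct (Hn0 1) as [h|h]; auto. symmetry in h. apply Hnz in h. lra. }
  destruct Hg as [Ginc _].
  assert (g_lt : forall x y, 0 <= x -> 0 <= y -> g x < g y -> x < y).
  { intros x y Hx Hy Hxy. destruct (Rlt_or_le x y) as [h|h]; auto.
    destruct h as [h|h]; [apply Ginc in h; auto; lra| subst; lra]. }
  assert (g_eq : forall x y, 0 <= x -> 0 <= y -> g x = g y -> x = y).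
  { intros x y Hx Hy Hxy. destruct (Rtotal_order x y) as [h|[h|h]]; auto.
    apply Ginc in h; auto; lra. apply Ginc in h; auto; lra. }
  destruct (Hbeta 1 Rlt_0_1) as [_ [p [[Om1 [[Hpos1 _] HOm10]] Hgp]]].
  assert (Hp0 : 0 < p) by (rewrite <- HOm10; apply Hpos1).
  assert (Hnp : nrm p = p * nrm 1) by (rewrite Hn1, Rabs_right; lra).
  assert (HOp : Oss < p).
  { assert (h : nrm Oss < nrm p).
    { apply g_lt; auto. lra. }
    rewrite Hnp, Hn1, Rabs_right in h by lra. nra. }
  assert (H2p : 0 < 2*A*p + Q).
  { destruct (Rlt_le_dec A 0) as [HA|HA].
    - rewrite (Oinf A Q HA) in Hup. simpl in Hup.
      set (q := - Q / (2*A)) in *.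
      assert (Hq : q * (2*A) = -Q) by (unfold q; field; lra).
      assert (Hq0 : 0 < q) by nra.
      assert (h : nrm p < nrm q) by (apply g_lt; auto; lra).
      rewrite Hnp, (Hn1 q), Rabs_right in h by lra.
      assert (p < q) by nra. nra.
    - nra. }
  set (c := - Q / (G * Oss)).
  assert (Hc : c < 0).
  { unfold c. unfold Rdiv. rewrite <- Ropp_mult_distr_l. apply Ropp_lt_gt_0_contravar.
    apply Rmult_lt_0_compat; auto. apply Rinv_0_lt_compat. apply Rmult_lt_0_compat; auto. }
  assert (HA : A = (G*Oss^2 - Q)/(2*Oss)).
  { apply (Rmult_eq_reg_r (2*Oss)); [|lra]. field_simplify; lra. }
  assert (Hid : forall x, G*(x-Oss)*(x-c) = G*x^2 - 2*A*x - Q).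
  { intro x. unfold c. rewrite HA. field. lra. }
  apply (core A Q G Oss c (vfun Oss c G p) (ub A Q p) beta); auto.
  - intros b Hb. apply vfun_props; auto.
  - intro s. apply ub_props; auto.
  - intro s. apply ub_props; auto.
  - intros T HT. destruct (Hbeta T HT) as [Hb [pT [[Om [HP HOm0]] HgT]]].
    split; [exact Hb|].
    assert (HpT : pT = p).
    { unfold periodic_sol in HP. cbv zeta in HP. destruct HP as [Hpos _].
      assert (0 < pT) by (rewrite <- HOm0; apply Hpos).
      assert (h : nrm pT = nrm p) by (apply g_eq; auto; lra).
      rewrite Hnp, Hn1, Rabs_right in h by lra. nra. }
    rewrite HpT in HOm0, HgT. clear HpT.
    unfold periodic_sol in HP. cbv zeta in HP.
    destruct HP as [Hpos [Hcont [Hper [Hon Hoff]]]].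
    set (b := beta T) in *.
    assert (HT' : Om T = p).
    { rewrite <- HOm0. rewrite <- (Hper 0). f_equal. ring. }
    assert (E1 : Om b = vfun Oss c G (Om 0) b).
    { apply (on_rel A Q G Oss c Om b); auto; try lra.
      intros t Ht. apply (Hon 0%Z). rewrite Rmult_0_l. lra. }
    assert (E2 : Om b = ub A Q (Om T) (T - b)).
    { apply off_rel; auto; try lra.
      intros t Ht. apply (Hoff 0%Z). rewrite Rmult_0_l. lra. }
    rewrite HOm0 in E1. rewrite HT' in E2. congruence.
Qed.
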